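(* Let $\lambda_1,\lambda_2\in P^+$ and set $a_\alpha=\min\{\lambda_1(h_\alpha),\lambda_2(h_\alpha)\}$ for $\alpha\in R^+$, $\mathbf a=(a_\alpha)$. Then the vectors $\prod_{\alpha\in R^+}(f_\alpha\otimes t)^{s_\alpha}.\mathbb 1$, for $\mathbf s=(s_\alpha)\in S(\mathbf a)$, span $M_{\lambda_1,\lambda_2}$, and hence their images span the subspace $U(\mathfrak n^-\otimes t).\mathbb 1\subset F_{\lambda_1,\lambda_2}$.
   Context: Let $\mathfrak{sl}_n=\mathfrak n^+\oplus\mathfrak h\oplus\mathfrak n^-$, $\mathfrak b=\mathfrak n^+\oplus\mathfrak h$, simple roots $\alpha_1,\dots,\alpha_{n-1}$, positive roots $R^+=\{\alpha_{k,\ell}=\alpha_k+\dots+\alpha_\ell:1\le k\le\ell\le n-1\}$, $P^+$ the dominant integral weights; for $\alpha\in R^+$ fix an $\mathfrak{sl}_2$-triple $e_\alpha,f_\alpha,h_\alpha$ with $f_\alpha\in\mathfrak g_{-\alpha}$. The current algebra $\mathfrak{sl}_n\otimes\mathbb C[t]$ has bracket $[x\otimes p,y\otimes q]=[x,y]\otimes pq$. Let $\mathbb C_{\lambda_1+\lambda_2}$ be the one-dimensional $\mathfrak b\otimes\mathbb C[t]$-module via $\mathfrak b\otimes\mathbb C[t]\to\mathfrak b\to\mathfrak h$ (evaluation at $t=0$, killing $\mathfrak n^+$) with $\mathfrak h$ acting by $\lambda_1+\lambda_2$; let $\mathfrak a=(\mathfrak b\otimes1)\oplus(\mathfrak{sl}_n\otimes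 t\mathbb C[t])$, and let $M_{\lambda_1,\lambda_2}$ be the quotient of $U(\mathfrak a)\otimes_{U(\mathfrak b\otimes\mathbb C[t])}\mathbb C_{\lambda_1+\lambda_2}$ by the submodule generated by $(\mathfrak n^-\otimes t^2\mathbb C[t])$ and by $(f_\alpha\otimes t)^{\min\{\lambda_1(h_\alpha),\lambda_2(h_\alpha)\}+1}$ ($\alpha\in R^+$) applied to the generator $\mathbb 1$. $F_{\lambda_1,\lambda_2}$ is the maximal $\mathfrak{sl}_n$-integrable quotient of $U(\mathfrak{sl}_n\otimes\mathbb C[t])\otimes_{U(\mathfrak a)}M_{\lambda_1,\lambda_2}$; equivalently, with $\lambda=\lambda_1+\lambda_2$, it is generated by $\mathbb 1$ subject to $(\mathfrak n^+\otimes\mathbb C[t]).\mathbb 1=0$, $(\mathfrak h\otimes t\mathbb C[t]).\mathbb 1=0$, $(\mathfrak n^-\otimes t^2\mathbb C[t]).\mathbb 1=0$, $(h\otimes1).\mathbb 1=\lambda(h)\mathbb 1$, $(f_\alpha\otimes1)^{\lambda(h_\alpha)+1}.\mathbb 1=0$, $(f_\alpha\otimes t)^{\min\{\lambda_1(h_\alpha),\lambda_2(h_\alpha)\}+1}.\mathbb 1=0$. A Dyck path is a sequence $\mathbf p=(\beta_1,\dots,\beta_s)$, $s\ge1$, of positive roots such that if $\beta_i=\alpha_{k,\ell}$ then $\beta_{i+1}\in\{\alpha_{k+1,\ell},\alpha_{k,\ell+1}\}$; if $\beta_1=\alpha_{k_1,\ell_1}$, $\beta_s=\alpha_{k_s,\ell_s}$,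 its base root is $\beta(\mathbf p)=\alpha_{k_1,\ell_s}$. $S(\mathbf a)$ is the set of $(x_\alpha)\in\mathbb Z_{\ge0}^{n(n-1)/2}$ with $\sum_{\alpha\in\mathbf p}x_\alpha\le a_{\beta(\mathbf p)}$ for every Dyck path $\mathbf p$. *)

(* Defs.v *)
From HB Require Import structures.
From mathcomp Require Import all_boot all_order all_algebra algC.
Set Implicit Arguments. Unset Strict Implicit. Unset Printing Implicit Defensive.
Import Order.TTheory GRing.Theory Num.Theory.
Local Open Scope ring_scope.

(* Conventions (0-indexed): the positive root alpha_{k,l} (1<=k<=l<=n-1)
   is encoded by the pair (i,j) = (k-1, l) of 'I_n with i < j, i.e.
   alpha = eps_i - eps_j.  e_alpha = E_{ij}, f_alpha = E_{ji},
   h_alpha = E_{ii} - E_{jj}. *)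

Definition posroot n (p : 'I_n * 'I_n) : bool := (p.1 < p.2)%N.

Definition posroots n : seq ('I_n * 'I_n) :=
  [seq p <- [seq (i, j) | i <- enum 'I_n, j <- enum 'I_n] | posroot p].

Definition froot n (p : 'I_n * 'I_n) : 'M[algC]_n := delta_mx p.2 p.1.

Definition sl_pred n : pred 'M[algC]_n := fun x => \tr x == 0.
Definition b_pred n : pred 'M[algC]_n := fun x =>
  [forall i : 'I_n, forall j : 'I_n, ((j < i)%N ==> (x i j == 0))] && (\tr x == 0).
Definition nplus_pred n : pred 'M[algC]_n := fun x =>
  [forall i : 'I_n, forall j : 'I_n, ((j <= i)%N ==> (x i j == 0))].
Definition nminus_pred n : pred 'M[algC]_n := fun x =>
  [forall i : 'I_n, forall j : 'I_n, ((i <= j)%N ==> (x i j == 0))].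
Definition h_pred n : pred 'M[algC]_n := fun x =>
  [forall i : 'I_n, forall j : 'I_n, ((i != j) ==> (x i j == 0))] && (\tr x == 0).

(* Weights: a weight is given by c : 'I_n -> int, lambda = sum_i c_i eps_i,
   so lambda(h) = sum_i c_i h_ii on the Cartan h (well defined on trace-zero
   diagonal matrices up to adding a constant to c).  lambda is dominant
   integral iff c is nonincreasing; then lambda(h_alpha) = c_i - c_j. *)
Definition dominant n (c : 'I_n -> int) : Prop :=
  forall i j : 'I_n, (i <= j)%N -> (c j <= c i)%R.

Definition wt_eval n (c : 'I_n -> int) (h : 'M[algC]_n) : algC :=
  \sum_i (c i)%:~R * h i i.

(* lambda(h_alpha) as a natural number (for dominant lambda) *)
Definition wt_h n (c : 'I_n -> int) (p : 'I_n * 'I_n) : nat := `|c p.1 - c p.2|%N.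

Definition wt_add n (c1 c2 : 'I_n -> int) : 'I_n -> int := fun i => c1 i + c2 i.

Definition amin n (c1 c2 : 'I_n -> int) (p : 'I_n * 'I_n) : nat :=
  minn (wt_h c1 p) (wt_h c2 p).

Definition dyck_step n (x y : 'I_n * 'I_n) : bool :=
  ((nat_of_ord y.1 == (x.1).+1) && (y.2 == x.2)) ||
  ((y.1 == x.1) && (nat_of_ord y.2 == (x.2).+1)).

Definition dyck n (p : seq ('I_n * 'I_n)) : bool :=
  match p with
  | [::] => false
  | x :: q => all (@posroot n) p && path (@dyck_step n) x q
  end.

Definition base_root n (x0 : 'I_n * 'I_n) (p : seq ('I_n * 'I_n)) : 'I_n * 'I_n :=
  ((head x0 p).1, (last x0 p).2).

(* s : 'I_n -> 'I_n -> nat; only the entries s i j with i < j matter. *)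
Definition in_S n (a : 'I_n * 'I_n -> nat) (s : 'I_n -> 'I_n -> nat) : Prop :=
  forall (p : seq ('I_n * 'I_n)) (x0 : 'I_n * 'I_n), dyck p ->
    (\sum_(x <- p) s x.1 x.2 <= a (base_root x0 p))%N.

(* Representations of a Lie subalgebra of sl_n (x) C[t] of the form
   \bigoplus_k D_k (x) t^k, given by rho k x = action of x (x) t^k. *)
Definition is_rep n (V : lmodType algC) (D : nat -> pred 'M[algC]_n)
    (rho : nat -> 'M[algC]_n -> V -> V) : Prop :=
  [/\ forall k x, D k x -> forall (a : algC) (w u : V),
         rho k x (a *: w + u) = a *: rho k x w + rho k x u,
      forall k x y, D k x -> D k y -> forall (a : algC) (w : V),
         rho k (a *: x + y) w = a *: rho k x w + rho k y w
    & forall k l x y, D k x -> D l y -> forall w : V,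
         rho k x (rho l y w) - rho l y (rho k x w) = rho (k + l)%N (x *m y - y *m x) w].

Inductive cyc n (V : lmodType algC) (A : nat -> pred 'M[algC]_n)
    (rho : nat -> 'M[algC]_n -> V -> V) (v : V) : V -> Prop :=
  | cyc_gen : cyc A rho v v
  | cyc_add w u : cyc A rho v w -> cyc A rho v u -> cyc A rho v (w + u)
  | cyc_scale (a : algC) w : cyc A rho v w -> cyc A rho v (a *: w)
  | cyc_act k x w : A k x -> cyc A rho v w -> cyc A rho v (rho k x w).

(* the algebra a = (b (x) 1) + (sl_n (x) t C[t]) *)
Definition a_dom n : nat -> pred 'M[algC]_n :=
  fun k => if k == 0%N then @b_pred n else @sl_pred n.
Definition cur_dom n : nat -> pred 'M[algC]_n := fun _ => @sl_pred n.
Definition nmt_dom n : nat -> pred 'M[algC]_n :=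
  fun k => if k == 1%N then @nminus_pred n else pred0.

Definition fvec n (V : lmodType algC) (rho : nat -> 'M[algC]_n -> V -> V)
    (s : 'I_n -> 'I_n -> nat) (v : V) : V :=
  foldr (fun p w => iter (s p.1 p.2) (rho 1%N (froot p)) w) v (posroots n).

Definition in_span_S n (V : lmodType algC) (rho : nat -> 'M[algC]_n -> V -> V)
    (a : 'I_n * 'I_n -> nat) (v w : V) : Prop :=
  exists (m : nat) (coef : 'I_m -> algC) (s : 'I_m -> 'I_n -> 'I_n -> nat),
    (forall i, in_S a (s i)) /\
    w = \sum_(i < m) coef i *: fvec rho (s i) v.

(* defining relations of the generator 1 of M_{lambda1,lambda2} *)
Definition M_rels n (c1 c2 : 'I_n -> int) (V : lmodType algC)
    (rho : nat -> 'M[algC]_n -> V -> V) (v : V) : Prop :=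
  [/\ forall x, nplus_pred x -> rho 0%N x v = 0,
      forall h, h_pred h -> rho 0%N h v = wt_eval (wt_add c1 c2) h *: v,
      forall k x, (1 <= k)%N -> b_pred x -> rho k x v = 0,
      forall k f, (2 <= k)%N -> nminus_pred f -> rho k f v = 0
    & forall p, posroot p -> iter (amin c1 c2 p).+1 (rho 1%N (froot p)) v = 0].

(* defining relations of the generator 1 of F_{lambda1,lambda2} *)
Definition F_rels n (c1 c2 : 'I_n -> int) (V : lmodType algC)
    (rho : nat -> 'M[algC]_n -> V -> V) (v : V) : Prop :=
  [/\ forall k x, nplus_pred x -> rho k x v = 0,
      forall k h, (1 <= k)%N -> h_pred h -> rho k h v = 0,
      forall k f, (2 <= k)%N -> nminus_pred f -> rho k f v = 0,
      forall h, h_pred h -> rho 0%N h v = wt_eval (wt_add c1 c2) h *: v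
    & (forall p, posroot p ->
         iter (wt_h (wt_add c1 c2) p).+1 (rho 0%N (froot p)) v = 0) /\
      (forall p, posroot p -> iter (amin c1 c2 p).+1 (rho 1%N (froot p)) v = 0)].

(* Main.v *)
Require Import Defs.
From HB Require Import structures.
From mathcomp Require Import all_boot all_order all_algebra algC.
From mathcomp Require Import zify.
From Stdlib Require Import Classical.
Set Implicit Arguments. Unset Strict Implicit. Unset Printing Implicit Defensive.
Import Order.TTheory GRing.Theory Num.Theory.
Local Open Scope ring_scope.
Local Notation froot := Defs.froot.

Section Mats.
Variable n : nat.
Implicit Types x y : 'M[algC]_n.

Lemma b_predP x : b_pred x = [forall i : 'I_n, forall j : 'I_n, (j < i)%N ==> (x i j == 0)] && (\tr x == 0).
Proof. by []. Qed.

Lemma sl_pred0 : sl_pred (0 : 'M[algC]_n).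
Proof. by rewrite /sl_pred mxtrace0. Qed.

Lemma sl_predD x y : sl_pred x -> sl_pred y -> sl_pred (x + y).
Proof. by rewrite /sl_pred mxtraceD => /eqP -> /eqP ->; rewrite addr0. Qed.

Lemma sl_predZ (c : algC) x : sl_pred x -> sl_pred (c *: x).
Proof. by rewrite /sl_pred mxtraceZ => /eqP ->; rewrite mulr0. Qed.

Lemma sl_comm x y : sl_pred (x *m y - y *m x).
Proof. by rewrite /sl_pred raddfB /= mxtrace_mulC subrr. Qed.

Lemma b_pred0 : b_pred (0 : 'M[algC]_n).
Proof.
rewrite b_predP mxtrace0 eqxx andbT; apply/forallP=> i; apply/forallP=> j.
by rewrite mxE eqxx implybT.
Qed.

Lemma b_predD x y : b_pred x -> b_pred y -> b_pred (x + y).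
Proof.
rewrite !b_predP => /andP[/forallP Hx tx] /andP[/forallP Hy ty].
apply/andP; split; last exact: sl_predD.
apply/forallP=> i; apply/forallP=> j.
apply/implyP=> lt; rewrite mxE.
by move: (forallP (Hx i) j) (forallP (Hy i) j); rewrite lt /= => /eqP -> /eqP ->; rewrite addr0.
Qed.

Lemma b_predZ (c : algC) x : b_pred x -> b_pred (c *: x).
Proof.
rewrite !b_predP => /andP[/forallP Hx tx].
apply/andP; split; last exact: sl_predZ.
apply/forallP=> i; apply/forallP=> j.
apply/implyP=> lt; rewrite mxE.
by move: (forallP (Hx i) j); rewrite lt /= => /eqP ->; rewrite mulr0.
Qed.

Lemma b_sl x : b_pred x -> sl_pred x.
Proof. by case/andP. Qed.

Lemma nminus0 : nminus_pred (0 : 'M[algC]_n).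
Proof. by apply/forallP=> i; apply/forallP=> j; rewrite mxE eqxx implybT. Qed.

Definition lowp x : 'M[algC]_n := \matrix_(i, j) (if (j < i)%N then x i j else 0).
Definition upp x : 'M[algC]_n := \matrix_(i, j) (if (j < i)%N then 0 else x i j).

Lemma low_up x : x = lowp x + upp x.
Proof. by apply/matrixP=> i j; rewrite !mxE; case: ifP; rewrite ?addr0 ?add0r. Qed.

Lemma nminus_low x : nminus_pred (lowp x).
Proof.
apply/forallP=> i; apply/forallP=> j; apply/implyP=> le; rewrite mxE.
by rewrite ltnNge le.
Qed.

Lemma tr_low x : \tr (lowp x) = 0.
Proof. by rewrite /mxtrace big1 // => i _; rewrite mxE ltnn. Qed.

Lemma sl_low x : sl_pred (lowp x).
Proof. by rewrite /sl_pred tr_low. Qed.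

Lemma b_upp x : sl_pred x -> b_pred (upp x).
Proof.
move=> hx; rewrite b_predP; apply/andP; split.
  by apply/forallP=> i; apply/forallP=> j; apply/implyP=> lt; rewrite mxE lt.
move: hx; rewrite /sl_pred {1}(low_up x) mxtraceD tr_low add0r //.
Qed.

Lemma lowp_sum x : lowp x = \sum_(i < n) \sum_(j < n) (if (j < i)%N then x i j else 0) *: delta_mx i j.
Proof.
apply/matrixP=> i j; rewrite mxE summxE (bigD1 i) //= summxE (bigD1 j) //= big1.
  rewrite big1 ?addr0; first by rewrite !mxE !eqxx mulr1.
  move=> k nk; rewrite summxE big1 // => l _.
  by rewrite !mxE eq_sym (negbTE nk) mulr0.
by move=> l nl; rewrite !mxE eqxx eq_sym (negbTE nl) mulr0.
Qed.

Lemma nminus_prod0 x y (i j k : 'I_n) : nminus_pred x -> nminus_pred y -> (i <= j)%N ->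
  x i k * y k j = 0.
Proof.
move=> /forallP hx /forallP hy le.
case: (ltnP k i) => ki.
  by move: (forallP (hy k) j); rewrite (leq_trans (ltnW ki) le) /= => /eqP ->; rewrite mulr0.
by move: (forallP (hx i) k); rewrite ki /= => /eqP ->; rewrite mul0r.
Qed.

Lemma nminus_comm x y : nminus_pred x -> nminus_pred y -> nminus_pred (x *m y - y *m x).
Proof.
move=> hx hy; apply/forallP=> i; apply/forallP=> j; apply/implyP=> le.
by rewrite !mxE !big1 ?subrr // => k _; apply: nminus_prod0.
Qed.

Lemma sl_delta (i j : 'I_n) : i != j -> sl_pred (delta_mx i j : 'M[algC]_n).
Proof.
move=> nij; rewrite /sl_pred /mxtrace big1 // => k _; rewrite mxE.
by case: (k =P i) => [->|] //=; rewrite (negbTE nij).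
Qed.

Lemma sl_term (y : 'M[algC]_n) (i j : 'I_n) :
  sl_pred ((if (j < i)%N then y i j else 0) *: delta_mx i j).
Proof.
case: ifP => ji; last by rewrite scale0r; exact: sl_pred0.
by apply: sl_predZ; apply: sl_delta; rewrite neq_ltn ji orbT.
Qed.

Definition nup (x : 'M[algC]_n) : 'M[algC]_n := \matrix_(i, j) (if (i < j)%N then x i j else 0).
Definition dg (x : 'M[algC]_n) : 'M[algC]_n := \matrix_(i, j) (if i == j then x i j else 0).

Lemma b_nup_dg x : b_pred x -> x = nup x + dg x.
Proof.
case/andP=> /forallP hx _; apply/matrixP=> i j; rewrite !mxE -val_eqE /=.
case: (ltngtP i j) => [lij|lji|eij].
- by rewrite addr0.
- by move: (forallP (hx i) j); rewrite lji addr0 => /eqP.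
- by rewrite add0r.
Qed.

Lemma tr_nup x : \tr (nup x) = 0.
Proof. by rewrite /mxtrace big1 // => i _; rewrite mxE ltnn. Qed.

Lemma tr_dg x : \tr (dg x) = \tr x.
Proof. by apply: eq_bigr => i _; rewrite mxE eqxx. Qed.

Lemma nplus_nup x : nplus_pred (nup x).
Proof.
apply/forallP=> i; apply/forallP=> j; apply/implyP=> le; rewrite mxE.
by rewrite ltnNge le.
Qed.

Lemma b_nup x : b_pred (nup x).
Proof.
apply/andP; split; last by rewrite tr_nup.
apply/forallP=> i; apply/forallP=> j; apply/implyP=> lt; rewrite mxE.
by rewrite ltnNge (ltnW lt).
Qed.

Lemma h_dg x : sl_pred x -> h_pred (dg x).
Proof.
move=> hx; apply/andP; split; last by rewrite tr_dg.
apply/forallP=> i; apply/forallP=> j; apply/implyP=> nij; rewrite mxE.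
by rewrite (negbTE nij).
Qed.

Lemma b_dg x : sl_pred x -> b_pred (dg x).
Proof.
move=> hx; apply/andP; split; last by rewrite tr_dg.
apply/forallP=> i; apply/forallP=> j; apply/implyP=> lt; rewrite mxE.
by rewrite -val_eqE /= (gtn_eqF lt).
Qed.

End Mats.
Section Entry.
Variable n : nat.
Lemma comm_entry (a b x y i j : 'I_n) :
  (if (j < i)%N then (delta_mx a b *m delta_mx y x - delta_mx y x *m delta_mx a b : 'M[algC]_n) i j else 0) =
   ((b == y) && (x < a)%N && (i == a) && (j == x))%:R - ((a == x) && (b < y)%N && (i == y) && (j == b))%:R.
Proof.
rewrite !mul_delta_mx_cond (eq_sym a x).
have M1 : (delta_mx a x *+ (b == y) : 'M[algC]_n) i j = ((b == y) && ((i == a) && (j == x)))%:R.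
  by case: (b == y); rewrite ?mulr1n ?mulr0n !mxE.
have M2 : (delta_mx y b *+ (x == a) : 'M[algC]_n) i j = ((x == a) && ((i == y) && (j == b)))%:R.
  by case: (x == a); rewrite ?mulr1n ?mulr0n !mxE.
case: ifP => ji.
  have E1 : ((i == a) && (j == x)) = ((x < a)%N && (i == a) && (j == x)).
    by case: (i =P a) => [ea|]; case: (j =P x) => [ex|]; rewrite ?andbF // -ea -ex ji.
  have E2 : ((i == y) && (j == b)) = ((b < y)%N && (i == y) && (j == b)).
    by case: (i =P y) => [ey|]; case: (j =P b) => [eb|]; rewrite ?andbF // -ey -eb ji.
  by rewrite 2!mxE M1 M2 E1 E2 !andbA.
have H1 : ((b == y) && (x < a)%N && (i == a) && (j == x)) = false.
  case: (i =P a) => [ea|]; case: (j =P x) => [ex|]; rewrite ?andbF //.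
  by rewrite -ea -ex ji andbF.
have H2 : ((x == a) && (b < y)%N && (i == y) && (j == b)) = false.
  case: (i =P y) => [ey|]; case: (j =P b) => [eb|]; rewrite ?andbF //.
  by rewrite -ey -eb ji andbF.
by rewrite H1 H2 subrr.
Qed.
End Entry.

Lemma sum_if1 n (V : lmodType algC) (F : 'I_n -> V) a : \sum_i (if i == a then F i else 0) = F a.
Proof. by rewrite -big_mkcond big_pred1_eq. Qed.
Lemma sum2_delta n (V : lmodType algC) (c : bool) (a x : 'I_n) (G : 'I_n -> 'I_n -> V) :
  \sum_(i < n) \sum_(j < n) (c && (i == a) && (j == x))%:R *: G i j = if c then G a x else 0.
Proof.
case: c; last by rewrite big1 // => i _; rewrite big1 // => j _; rewrite /= scale0r.
rewrite -[RHS](@sum_if1 _ _ (fun i => G i x) a); apply: eq_bigr => i _ /=.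
case: (i == a) => /=; last by rewrite big1 // => j _; rewrite scale0r.
rewrite -[RHS](@sum_if1 _ _ (fun j => G i j) x); apply: eq_bigr => j _ /=.
by case: (j == x); rewrite ?scale1r ?scale0r.
Qed.
Section Comb.
Variable n : nat.
Implicit Types (g h : 'I_n * 'I_n) (L : seq ('I_n * 'I_n)) (c : 'I_n) (d : algC).

Definition trim (ga g : 'I_n * 'I_n) : seq (algC * ('I_n * 'I_n)) :=
  (if (ga.2 == g.2) && (g.1 < ga.1)%N then [:: (1, (g.1, ga.1))] else [::]) ++
  (if (ga.1 == g.1) && (ga.2 < g.2)%N then [:: (-1, (ga.2, g.2))] else [::]).

Fixpoint Dact ga L : seq (algC * seq ('I_n * 'I_n)) :=
  match L with
  | [::] => [::]
  | g :: L' => [seq (p.1, p.2 :: L') | p <- trim ga g] ++ [seq (p.1, g :: p.2) | p <- Dact ga L']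
  end.

Definition step ga (l : seq (algC * seq ('I_n * 'I_n))) :=
  flatten [seq [seq (p.1 * q.1, q.2) | q <- Dact ga p.2] | p <- l].

Definition DactsFrom (ops : seq ('I_n * 'I_n)) l := foldr step l ops.
Definition Dacts ops L := DactsFrom ops [:: (1, L)].

Lemma mem_step ga l d L' :
  (d, L') \in step ga l ->
  exists p q, [/\ p \in l, q \in Dact ga p.2, d = p.1 * q.1 & L' = q.2].
Proof.
case/flattenP=> s /mapP[p pl ->] /mapP[q qD [-> ->]].
by exists p, q.
Qed.

Lemma step_mem ga l p q : p \in l -> q \in Dact ga p.2 -> (p.1 * q.1, q.2) \in step ga l.
Proof.
move=> pl qD; apply/flattenP; exists [seq (p.1 * q.1, q.2) | q <- Dact ga p.2].
  by apply/mapP; exists p.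
by apply/mapP; exists q.
Qed.

Lemma DactsFrom_comp A l0 d1 L1 d2 L2 :
  (d1, L1) \in l0 -> (d2, L2) \in DactsFrom A [:: (1, L1)] ->
  (d1 * d2, L2) \in DactsFrom A l0.
Proof.
move=> h1; elim: A d2 L2 => [|ga A IH] d2 L2 /=.
  by rewrite inE => /eqP [-> ->]; rewrite mulr1.
case/mem_step=> p [q [pD qD -> ->]].
have := IH p.1 p.2; rewrite -surjective_pairing => /(_ pD) hp.
by rewrite mulrA; apply: (step_mem hp qD).
Qed.

Lemma Dacts_cat A B L d1 L1 d2 L2 :
  (d1, L1) \in Dacts B L -> (d2, L2) \in Dacts A L1 ->
  (d1 * d2, L2) \in Dacts (A ++ B) L.
Proof. by rewrite /Dacts /DactsFrom foldr_cat; apply: DactsFrom_comp. Qed.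

Lemma Dact_at ga P g Q d g' : (d, g') \in trim ga g ->
  (d, P ++ g' :: Q) \in Dact ga (P ++ g :: Q).
Proof.
elim: P => [|h P IH] /= ht.
  by rewrite mem_cat; apply/orP; left; apply/mapP; exists (d, g').
rewrite mem_cat; apply/orP; right; apply/mapP; exists (d, P ++ g' :: Q) => //.
exact: IH.
Qed.

Lemma mem_Dact ga L d L' : (d, L') \in Dact ga L ->
  exists P g Q g', [/\ L = P ++ g :: Q, L' = P ++ g' :: Q & (d, g') \in trim ga g].
Proof.
elim: L d L' => [|g L IH] d L' //=.
rewrite mem_cat => /orP[/mapP[[d' g'] ht [-> ->]]|/mapP[[d' M] hM [-> ->]]].
  by exists [::], g, L, g'.
have [P [h [Q [h' [eL eM ht]]]]] := IH _ _ hM.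
by exists (g :: P), h, Q, h'; rewrite eL eM.
Qed.

Variables (i j : 'I_n).
Definition inrect g := [&& (i <= g.1)%N, (g.2 <= j)%N & (g.1 < g.2)%N].
Definition opr (o : bool * 'I_n) : 'I_n * 'I_n := if o.1 then (i, o.2) else (o.2, j).
Definition goodop (o : bool * 'I_n) := if o.1 then (i < o.2)%N else (o.2 < j)%N.

Lemma trim_left c g (c' : algC) g' : inrect g -> (i < c)%N -> (c', g') \in trim (i, c) g ->
  [/\ c' = -1, g = (i, g'.2), g' = (c, g.2) & inrect g'].
Proof.
case: g => x y /and3P[/= ix yj xy] ic; rewrite /trim /= mem_cat.
case/orP.
  case: ifP => // /andP[_ xi]; move: (leq_trans xi ix); rewrite ltnn //.
case: ifP => // /andP[/eqP ex cy]; rewrite inE => /eqP [-> ->] /=.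
by split => //; [rewrite ex | rewrite /inrect /= (ltnW ic) yj cy].
Qed.

Lemma trim_right c g (c' : algC) g' : inrect g -> (c < j)%N -> (c', g') \in trim (c, j) g ->
  [/\ c' = 1, g = (g'.1, j), g' = (g.1, c) & inrect g'].
Proof.
case: g => x y /and3P[/= ix yj xy] cj; rewrite /trim /= mem_cat.
case/orP; last first.
  case: ifP => // /andP[_ jy]; move: (leq_trans jy yj); rewrite ltnn //.
case: ifP => // /andP[/eqP ey xc]; rewrite inE => /eqP [-> ->] /=.
by split => //; [rewrite ey | rewrite /inrect /= ix xc (ltnW cj)].
Qed.

Lemma count_mem_cat1 (T : eqType) (u : T) (P Q : seq T) a :
  (count_mem u (P ++ a :: Q) = count_mem u (P ++ Q) + (a == u))%N.
Proof. by rewrite !count_cat /= addnCA addnC. Qed.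

Lemma Dact_left c L (c' : algC) L' : all inrect L -> (i < c)%N -> (c', L') \in Dact (i, c) L ->
  [/\ c' = -1, all inrect L', map snd L' = map snd L &
      forall u, (count_mem u (map fst L') + (i == u) = count_mem u (map fst L) + (c == u))%N].
Proof.
move=> hL ic /mem_Dact [P [g [Q [g' [eL eL' ht]]]]].
have hg : inrect g by move: hL; rewrite eL all_cat /= => /and3P[].
have [-> eg eg' hg'] := trim_left hg ic ht.
have e1 : g.1 = i by rewrite eg.
have e2 : g'.1 = c by rewrite eg'.
have e3 : g'.2 = g.2 by rewrite eg'.
split => //.
- by move: hL; rewrite eL eL' !all_cat /= hg' => /and3P[-> _ ->] //.
- by rewrite eL eL' !map_cat /= e3.
- by move=> u; rewrite eL eL' !map_cat /= !count_mem_cat1 e1 e2 addnAC.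
Qed.

Lemma Dact_right c L (c' : algC) L' : all inrect L -> (c < j)%N -> (c', L') \in Dact (c, j) L ->
  [/\ c' = 1, all inrect L', map fst L' = map fst L &
      forall u, (count_mem u (map snd L') + (j == u) = count_mem u (map snd L) + (c == u))%N].
Proof.
move=> hL cj /mem_Dact [P [g [Q [g' [eL eL' ht]]]]].
have hg : inrect g by move: hL; rewrite eL all_cat /= => /and3P[].
have [-> eg eg' hg'] := trim_right hg cj ht.
have e1 : g.2 = j by rewrite eg.
have e2 : g'.2 = c by rewrite eg'.
have e3 : g'.1 = g.1 by rewrite eg'.
split => //.
- by move: hL; rewrite eL eL' !all_cat /= hg' => /and3P[-> _ ->] //.
- by rewrite eL eL' !map_cat /= e3.
- by move=> u; rewrite eL eL' !map_cat /= !count_mem_cat1 e1 e2 addnAC.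
Qed.

Definition lefts (ops : seq (bool * 'I_n)) := [seq o.2 | o <- ops & o.1].
Definition rights (ops : seq (bool * 'I_n)) := [seq o.2 | o <- ops & ~~ o.1].

Lemma Dacts_inv ops L0 d L' : all goodop ops -> all inrect L0 ->
  (d, L') \in Dacts (map opr ops) L0 ->
  [/\ d = (-1) ^+ size (lefts ops), all inrect L',
   forall u, (count_mem u (map fst L') + (i == u) * size (lefts ops) =
              count_mem u (map fst L0) + count_mem u (lefts ops))%N
   & forall u, (count_mem u (map snd L') + (j == u) * size (rights ops) =
              count_mem u (map snd L0) + count_mem u (rights ops))%N].
Proof.
move=> hops hL0; elim: ops hops d L' => [|o ops IH] /=.
  move=> _ d L'; rewrite inE => /eqP [-> ->]; split => // u; by rewrite muln0 !addn0.
case/andP=> ho hops d L' /mem_step [p [q [hp hq -> ->]]].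
case: p hp hq => pd pL /= hp hq.
have [e1 hin C1 C2] := IH hops pd pL hp.
case: o ho hq => [[] c] /= ho hq.
- case: q hq => qd qL /= hq.
  have [eq hin' E1 E2] := Dact_left hin ho hq.
  rewrite /lefts /rights /= -/(lefts ops) -/(rights ops).
  split => //.
  + by rewrite e1 eq exprS mulrC mulN1r.
  + move=> u; move: (C1 u) (E2 u); rewrite /=.
    by case: (i == u); case: (c == u) => /=; lia.
  + by move=> u; rewrite E1; apply: C2.
- case: q hq => qd qL /= hq.
  have [eq hin' E1 E2] := Dact_right hin ho hq.
  rewrite /lefts /rights /= -/(lefts ops) -/(rights ops).
  split => //.
  + by rewrite e1 eq mulr1.
  + by move=> u; rewrite E1; apply: C1.
  + move=> u; move: (C2 u) (E2 u); rewrite /=.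
    by case: (j == u); case: (c == u) => /=; lia.
Qed.

Definition opsel (t : 'I_n * 'I_n) : seq (bool * 'I_n) :=
  (if t.1 != i then [:: (true, t.1)] else [::]) ++ (if t.2 != j then [:: (false, t.2)] else [::]).
Definition opsT (T : seq ('I_n * 'I_n)) := flatten (map opsel T).

Lemma opsT_good T : all inrect T -> all goodop (opsT T).
Proof.
elim: T => //= t T IH /andP[/and3P[it tj tt] hT]; rewrite all_cat IH // andbT.
rewrite /opsel all_cat; apply/andP; split.
  by case: ifP => //= ni; rewrite /goodop /= andbT ltn_neqAle eq_sym ni it.
by case: ifP => //= nj; rewrite /goodop /= andbT ltn_neqAle nj tj.
Qed.

Lemma lefts_cat A B : lefts (A ++ B) = lefts A ++ lefts B.
Proof. by rewrite /lefts filter_cat map_cat. Qed.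
Lemma rights_cat A B : rights (A ++ B) = rights A ++ rights B.
Proof. by rewrite /rights filter_cat map_cat. Qed.
Lemma lefts_opsel t : lefts (opsel t) = if t.1 != i then [:: t.1] else [::].
Proof. by rewrite /opsel lefts_cat; case: ifP; case: ifP. Qed.
Lemma rights_opsel t : rights (opsel t) = if t.2 != j then [:: t.2] else [::].
Proof. by rewrite /opsel rights_cat; case: ifP; case: ifP. Qed.

Lemma opsT_count T : all inrect T ->
  (forall u, (count_mem u (map fst T) + (i == u) * size (lefts (opsT T)) =
     size T * (i == u) + count_mem u (lefts (opsT T)))%N) /\
  (forall u, (count_mem u (map snd T) + (j == u) * size (rights (opsT T)) =
     size T * (j == u) + count_mem u (rights (opsT T)))%N).
Proof.
elim: T => [|t T IH] /=; first by split => u; rewrite muln0.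
case/andP=> _ /IH [C1 C2].
have -> : opsT (t :: T) = opsel t ++ opsT T by [].
rewrite lefts_cat rights_cat lefts_opsel rights_opsel.
split=> u; rewrite size_cat count_cat.
  move: (C1 u); case: (t.1 =P i) => [->|ni] /=.
    by case: (i == u) => /=; lia.
  by case: (i == u); case: (t.1 == u) => /=; lia.
move: (C2 u); case: (t.2 =P j) => [->|nj] /=.
  by case: (j == u) => /=; lia.
by case: (j == u); case: (t.2 == u) => /=; lia.
Qed.

Lemma perm_count_mem (T : eqType) (s1 s2 : seq T) :
  (forall u, count_mem u s1 = count_mem u s2) -> perm_eq s1 s2.
Proof. by move=> h; rewrite /perm_eq; apply/allP=> x _; rewrite /= h. Qed.

Lemma outcome_inv T d L' : (i < j)%N -> all inrect T ->
  (d, L') \in Dacts (map opr (opsT T)) (nseq (size T) (i, j)) ->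
  [/\ d = (-1) ^+ size (lefts (opsT T)), all inrect L',
      perm_eq (map fst L') (map fst T) & perm_eq (map snd L') (map snd T)].
Proof.
move=> ij hT hD.
have hN : all inrect (nseq (size T) (i, j)).
  by apply/allP=> g /nseqP [-> _]; rewrite /inrect /= !leqnn ij.
have [e hin C1 C2] := Dacts_inv (opsT_good hT) hN hD.
have [D1 D2] := opsT_count hT.
split => //; apply: perm_count_mem => u.
  apply/eqP; rewrite -(eqn_add2r ((i == u) * size (lefts (opsT T)))) C1 D1.
  by rewrite map_nseq count_nseq /= mulnC.
apply/eqP; rewrite -(eqn_add2r ((j == u) * size (rights (opsT T)))) C2 D2.
by rewrite map_nseq count_nseq /= mulnC.
Qed.

Lemma Dacts1 ga L q : q \in Dact ga L -> (q.1, q.2) \in Dacts [:: ga] L.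
Proof.
by move=> hq; have := @step_mem ga [:: (1, L)] (1, L) q; rewrite mem_head mul1r; apply.
Qed.

Lemma Dacts2 ga1 ga2 L q1 q2 : q1 \in Dact ga2 L -> q2 \in Dact ga1 q1.2 ->
  (q1.1 * q2.1, q2.2) \in Dacts [:: ga1; ga2] L.
Proof.
move=> h1 h2; have := Dacts1 h1; rewrite /Dacts /DactsFrom /= => h.
exact: (@step_mem ga1 _ (q1.1, q1.2) q2 h h2).
Qed.

Lemma exists_diag1 t P Q : inrect t ->
  exists d, (d, P ++ t :: Q) \in Dacts (map opr (opsel t)) (P ++ (i, j) :: Q).
Proof.
case: t => [x y] /and3P[/= ix yj xy]; rewrite /opsel /=.
case: (x =P i) => [ex|nx]; case: (y =P j) => [ey|ny] /=.
- by exists 1; rewrite ex ey inE.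
- exists (1 : algC); have := @Dacts1 (y, j) (P ++ (i, j) :: Q) (1, P ++ (x, y) :: Q); apply.
  by apply: Dact_at; rewrite /trim /= eqxx -ex xy mem_cat inE eqxx.
- exists (-1 : algC); have := @Dacts1 (i, x) (P ++ (i, j) :: Q) (-1, P ++ (x, y) :: Q); apply.
  apply: Dact_at; rewrite /trim /= mem_cat; apply/orP; right.
  by rewrite eqxx -ey xy inE.
- exists (1 * -1 : algC).
  have := @Dacts2 (i, x) (y, j) (P ++ (i, j) :: Q) (1, P ++ (i, y) :: Q) (-1, P ++ (x, y) :: Q); apply.
    by apply: Dact_at; rewrite /trim /= eqxx (leq_ltn_trans ix xy) mem_cat inE eqxx.
  apply: Dact_at; rewrite /trim /= mem_cat; apply/orP; right.
  by rewrite eqxx xy inE.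
Qed.

Lemma exists_diag T : all inrect T ->
  exists d, (d, T) \in Dacts (map opr (opsT T)) (nseq (size T) (i, j)).
Proof.
suff H : all inrect T -> forall P, exists d, (d, P ++ T) \in Dacts (map opr (opsT T)) (P ++ nseq (size T) (i, j)).
  by move=> hT; apply: (H hT [::]).
elim: T => [|t T IH] /= hT P.
  by exists 1; rewrite /Dacts /= inE.
case/andP: hT => ht hT.
have [d1 h1] := IH hT (rcons P (i, j)).
have [d2 h2] := exists_diag1 P T ht.
exists (d1 * d2).
have -> : opsT (t :: T) = opsel t ++ opsT T by [].
rewrite map_cat.
move: h1; rewrite -cats1 -!catA /= => h1.
exact: Dacts_cat h1 h2.
Qed.

End Comb.
Lemma key1 (a b c d : nat) : (c < a -> d < b -> a*d + c*b < c*d + a*b)%N.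
Proof. move=> h1 h2. nia. Qed.
Lemma key2 (a b c d w2 wT : nat) : (c < a -> d < b -> c*d + w2 <= wT -> a*d + c*b + w2 < a*b + wT)%N.
Proof. move=> h1 h2 h3. have := key1 h1 h2. lia. Qed.

Section Rearr.
Variable n : nat.
Implicit Types (g h : 'I_n * 'I_n) (L T : seq ('I_n * 'I_n)).

Definition weight L := (\sum_(g <- L) (g.1 * g.2))%N.
Definition le2 g h := ((g.1 <= h.1) && (g.2 <= h.2))%N.
Definition chain T := {in T &, forall x y, le2 x y || le2 y x}.

Lemma weight_cons g L : weight (g :: L) = (g.1 * g.2 + weight L)%N.
Proof. by rewrite /weight big_cons. Qed.
Lemma weight_cat L1 L2 : weight (L1 ++ L2) = (weight L1 + weight L2)%N.
Proof. by rewrite /weight big_cat. Qed.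
Lemma weight_perm L1 L2 : perm_eq L1 L2 -> weight L1 = weight L2.
Proof. by move=> h; rewrite /weight (perm_big _ h). Qed.

Lemma le2_trans : transitive le2.
Proof.
move=> b a c /andP[h1 h2] /andP[h3 h4]; apply/andP; split.
  exact: leq_trans h1 h3.
exact: leq_trans h2 h4.
Qed.

Lemma chain_sub T T' : {subset T' <= T} -> chain T -> chain T'.
Proof. by move=> s hc x y hx hy; apply: hc; apply: s. Qed.

Lemma chain_max T : T != [::] -> chain T -> exists2 m, m \in T & {in T, forall x, le2 x m}.
Proof.
elim: T => // a T IH _ hc.
case: T IH hc => [|b T] IH hc.
  by exists a; rewrite ?mem_head // => x; rewrite inE => /eqP ->; rewrite /le2 !leqnn.
have hc' : chain (b :: T) by apply: (chain_sub _ hc) => x hx; rewrite inE hx orbT.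
have [m hm mmax] := IH isT hc'.
have : le2 a m || le2 m a by apply: hc; rewrite ?mem_head // inE hm orbT.
case/orP=> h.
  exists m; first by rewrite inE hm orbT.
  by move=> x; rewrite inE => /orP[/eqP ->|hx] //; apply: mmax.
exists a; first exact: mem_head.
move=> x; rewrite inE => /orP[/eqP ->|hx]; first by rewrite /le2 !leqnn.
exact: le2_trans (mmax _ hx) h.
Qed.

Lemma rearr m T L : size T = m -> chain T ->
  perm_eq (map fst L) (map fst T) -> perm_eq (map snd L) (map snd T) ->
  perm_eq L T \/ (weight L < weight T)%N.
Proof.
elim: m T L => [|m IH] T L.
  move/size0nil=> -> _ hf _; left.
  by move: (perm_size hf); rewrite size_map /= => /size0nil ->.
move=> hsz hc hf hs.
have T0 : T != [::] by apply/eqP => e; rewrite e in hsz.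
have [mx mxT mxmax] := chain_max T0 hc.
set T' := rem mx T.
have pT : perm_eq T (mx :: T') by apply: perm_to_rem.
have hsz' : size T' = m by rewrite size_rem // hsz.
have hc' : chain T' by apply: (chain_sub (@mem_rem _ mx T) hc).
have hf' : perm_eq (map fst L) (mx.1 :: map fst T').
  by apply: (perm_trans hf); have := perm_map fst pT.
have hs' : perm_eq (map snd L) (mx.2 :: map snd T').
  by apply: (perm_trans hs); have := perm_map snd pT.
have b1 : forall e, e \in L -> (e.1 <= mx.1)%N.
  move=> e eL; have : e.1 \in map fst T by rewrite -(perm_mem hf); apply: map_f.
  by case/mapP=> t tT ->; case/andP: (mxmax t tT).
have b2 : forall e, e \in L -> (e.2 <= mx.2)%N.
  move=> e eL; have : e.2 \in map snd T by rewrite -(perm_mem hs); apply: map_f.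
  by case/mapP=> t tT ->; case/andP: (mxmax t tT).
have wT : weight T = (mx.1 * mx.2 + weight T')%N by rewrite (weight_perm pT) weight_cons.
case: (boolP (mx \in L)) => mxL.
  set L' := rem mx L.
  have pL : perm_eq L (mx :: L') by apply: perm_to_rem.
  have hf1 : perm_eq (map fst L') (map fst T').
    rewrite -(perm_cons mx.1); apply: perm_trans hf'.
    by rewrite perm_sym; have := perm_map fst pL.
  have hs1 : perm_eq (map snd L') (map snd T').
    rewrite -(perm_cons mx.2); apply: perm_trans hs'.
    by rewrite perm_sym; have := perm_map snd pL.
  have wL : weight L = (mx.1 * mx.2 + weight L')%N by rewrite (weight_perm pL) weight_cons.
  case: (IH T' L' hsz' hc' hf1 hs1) => [p|lt].
    left; apply: (perm_trans pL); rewrite perm_sym; apply: (perm_trans pT).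
    by rewrite perm_cons perm_sym.
  by right; rewrite wL wT ltn_add2l.
right.
have : mx.1 \in map fst L by rewrite (perm_mem hf'); exact: mem_head.
case/mapP=> e1 e1L he1.
have : mx.2 \in map snd L by rewrite (perm_mem hs'); exact: mem_head.
case/mapP=> e2 e2L he2.
have ne1 : e1.2 != mx.2.
  apply/eqP=> e; move: mxL; have -> : mx = e1 by apply: injective_projections.
  by rewrite e1L.
have ne2 : e2.1 != mx.1.
  apply/eqP=> e; move: mxL; have -> : mx = e2 by apply: injective_projections.
  by rewrite e2L.
have lt1 : (e1.2 < mx.2)%N by rewrite ltn_neqAle ne1 b2.
have lt2 : (e2.1 < mx.1)%N by rewrite ltn_neqAle ne2 b1.
have ne12 : e2 != e1 by apply/eqP=> e; move: ne1; rewrite -e -he2 eqxx.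
set L2 := rem e2 (rem e1 L).
have pL : perm_eq L (e1 :: e2 :: L2).
  apply: (perm_trans (perm_to_rem e1L)); rewrite perm_cons.
  by apply: perm_to_rem; apply: rem_mem.
set L1 := (e2.1, e1.2) :: L2.
have hf1 : perm_eq (map fst L1) (map fst T').
  rewrite -(perm_cons mx.1); apply: perm_trans hf'.
  rewrite perm_sym; apply: (perm_trans (perm_map fst pL)).
  by rewrite /= -he1.
have hs1 : perm_eq (map snd L1) (map snd T').
  rewrite -(perm_cons mx.2); apply: perm_trans hs'.
  rewrite perm_sym; apply: (perm_trans (perm_map snd pL)).
  by rewrite /= -he2; apply/permP => P /=; rewrite addnCA.
have wL : weight L = (mx.1 * e1.2 + e2.1 * mx.2 + weight L2)%N.
  by rewrite (weight_perm pL) !weight_cons he1 he2 addnA.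
have wL1 : weight L1 = (e2.1 * e1.2 + weight L2)%N by rewrite weight_cons.
have le1 : (weight L1 <= weight T')%N.
  case: (IH T' L1 hsz' hc' hf1 hs1) => [p|lt]; last exact: ltnW.
  by rewrite (weight_perm p).
rewrite wL wT; apply: key2 => //; by rewrite -wL1.
Qed.

End Rearr.
Lemma perm_filter_flatten (T : eqType) (q L : seq T) : uniq q ->
  perm_eq [seq x <- L | x \in q] (flatten [seq nseq (count_mem g L) g | g <- q]).
Proof.
move=> uq; apply: perm_count_mem => u.
rewrite count_filter.
have -> : count (predI (pred1 u) (mem q)) L = ((u \in q) * count_mem u L)%N.
  case: (boolP (u \in q)) => uq'.
    by rewrite mul1n; apply: eq_count => x /=; case: eqP => // ->; rewrite uq'.
  by rewrite mul0n; apply/eqP; rewrite -leqn0 leqNgt -has_count; apply/hasP => -[x _ /= /andP[/eqP -> ]]; rewrite (negbTE uq').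
apply/esym; elim: q uq => [|g q IH] //= /andP[gq uq].
rewrite count_cat IH // count_nseq inE /=.
case: (g =P u) => [eg|ng] /=.
  by rewrite -eg (negbTE gq) /= eqxx mul1n mul0n addn0.
rewrite mul0n add0n; case: (u =P g) => [e|_] //.
by case: ng; rewrite e.
Qed.

Lemma size_flatten_nseq (T : eqType) (q : seq T) (f : T -> nat) :
  size (flatten [seq nseq (f g) g | g <- q]) = (\sum_(g <- q) f g)%N.
Proof. by elim: q => [|g q IH] /=; rewrite ?big_nil // big_cons size_cat size_nseq IH. Qed.

Lemma mem_flatten_nseq (T : eqType) (q : seq T) (f : T -> nat) x :
  x \in flatten [seq nseq (f g) g | g <- q] -> x \in q.
Proof.
case/flattenP=> s /mapP[g gq ->] /nseqP[-> _] //.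
Qed.

Section Dyck.
Variable n : nat.
Implicit Types (g h a b : 'I_n * 'I_n) (q : seq ('I_n * 'I_n)).

Lemma step_le2 g h : dyck_step g h -> le2 g h.
Proof.
rewrite /dyck_step /le2 -!val_eqE /= => /orP[/andP[/eqP -> /eqP ->]|/andP[/eqP -> /eqP ->]].
  by rewrite leqnSn leqnn.
by rewrite leqnSn leqnn.
Qed.

Lemma step_lt g h : dyck_step g h -> (g.1 + g.2 < h.1 + h.2)%N.
Proof.
rewrite /dyck_step -!val_eqE /= => /orP[/andP[/eqP -> /eqP ->]|/andP[/eqP -> /eqP ->]].
  by rewrite addSn.
by rewrite addnS.
Qed.

Lemma path_le2 a q : path (@dyck_step n) a q -> {in q, forall g, le2 a g}.
Proof.
elim: q a => // b q IH a /= /andP[ab pq] g; rewrite inE => /orP[/eqP ->|gq].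
  exact: step_le2.
exact: le2_trans (step_le2 ab) (IH _ pq _ gq).
Qed.

Lemma path_last a q : path (@dyck_step n) a q -> {in a :: q, forall g, le2 g (last a q)}.
Proof.
elim: q a => [|b q IH] a /=.
  by move=> _ g; rewrite inE => /eqP ->; rewrite /le2 !leqnn.
case/andP=> ab pq g; rewrite inE => /orP[/eqP ->|gq]; last exact: IH.
exact: le2_trans (step_le2 ab) (IH _ pq _ (mem_head _ _)).
Qed.

Lemma path_chain a q : path (@dyck_step n) a q -> chain (a :: q : seq ('I_n * 'I_n)).
Proof.
elim: q a => [|b q IH] a.
  by move=> _ x y; rewrite !inE => /eqP -> /eqP ->; rewrite /le2 !leqnn.
move=> hp; have hp' := hp; case/andP: hp' => ab pq.
have la := path_le2 hp.
move=> x y; rewrite inE => /orP[/eqP ->|hx]; rewrite inE => /orP[/eqP ->|hy].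
- by rewrite /le2 !leqnn.
- by rewrite la.
- by rewrite la ?orbT.
- exact: (IH _ pq _ _ hx hy).
Qed.

Lemma path_uniq a q : path (@dyck_step n) a q -> uniq (a :: q : seq ('I_n * 'I_n)).
Proof.
move=> hp; apply: (@sorted_uniq _ (fun x y : 'I_n * 'I_n => (x.1 + x.2 < y.1 + y.2)%N)).
- by move=> y x z; apply: ltn_trans.
- by move=> x; rewrite ltnn.
by apply: (sub_path _ hp) => x y; apply: step_lt.
Qed.

End Dyck.
Lemma mem_posroots n (g : 'I_n * 'I_n) : (g \in posroots n) = posroot g.
Proof.
rewrite /posroots mem_filter; case: (posroot g) => //=.
by case: g => x y; apply: allpairs_f; rewrite mem_enum.
Qed.

Lemma uniq_posroots n : uniq (posroots n).
Proof.
rewrite /posroots filter_uniq // allpairs_uniq ?enum_uniq //.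
by move=> [x y] [x' y'] _ _ /= [-> ->].
Qed.

Section Rep.
Variables (n : nat) (V : lmodType algC) (rho : nat -> 'M[algC]_n -> V -> V).
Hypothesis HR : is_rep (@a_dom n) rho.

Local Notation D := (@a_dom n).
Implicit Types (g h : 'I_n * 'I_n) (L : seq ('I_n * 'I_n)) (x y : 'M[algC]_n).

Lemma D0 k : D k 0.
Proof. by rewrite /a_dom; case: (k == 0)%N; [exact: b_pred0 | exact: sl_pred0]. Qed.
Lemma DD k x y : D k x -> D k y -> D k (x + y).
Proof. by rewrite /a_dom; case: (k == 0)%N; [exact: b_predD | exact: sl_predD]. Qed.
Lemma DZ k c x : D k x -> D k (c *: x).
Proof. by rewrite /a_dom; case: (k == 0)%N; [exact: b_predZ | exact: sl_predZ]. Qed.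
Lemma Dsl k x : (0 < k)%N -> sl_pred x -> D k x.
Proof. by rewrite /a_dom; case: k. Qed.
Lemma Db k x : b_pred x -> D k x.
Proof. by rewrite /a_dom; case: (k == 0)%N => // /b_sl. Qed.

Lemma rhoDw k x w u : D k x -> rho k x (w + u) = rho k x w + rho k x u.
Proof. by case: HR => H _ _ hx; rewrite -{1}(scale1r w) H // scale1r. Qed.
Lemma rho0w k x : D k x -> rho k x 0 = 0.
Proof. by move=> hx; move: (rhoDw 0 0 hx); rewrite addr0 => /eqP; rewrite -subr_eq subrr eq_sym => /eqP. Qed.
Lemma rhoZw k x a w : D k x -> rho k x (a *: w) = a *: rho k x w.
Proof. by case: HR => H _ _ hx; rewrite -(addr0 (a *: w)) H // rho0w // addr0. Qed.
Lemma rhoNw k x w : D k x -> rho k x (- w) = - rho k x w.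
Proof. by move=> hx; rewrite -scaleN1r rhoZw // scaleN1r. Qed.
Lemma rho_sumw k x (I : Type) (r : seq I) (P : pred I) (F : I -> V) : D k x ->
  rho k x (\sum_(i <- r | P i) F i) = \sum_(i <- r | P i) rho k x (F i).
Proof. by move=> hx; apply: (big_morph _ (fun a b => rhoDw a b hx) (rho0w hx)). Qed.

Lemma rhoDx k x y w : D k x -> D k y -> rho k (x + y) w = rho k x w + rho k y w.
Proof. by case: HR => _ H _ hx hy; rewrite -{1}(scale1r x) H // scale1r. Qed.
Lemma rho0x k w : rho k 0 w = 0.
Proof. by move: (@rhoDx k 0 0 w (D0 k) (D0 k)); rewrite addr0 => /eqP; rewrite -subr_eq subrr eq_sym => /eqP. Qed.
Lemma rhoZx k x a w : D k x -> rho k (a *: x) w = a *: rho k x w.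
Proof. by case: HR => _ H _ hx; rewrite -(addr0 (a *: x)) H ?D0 // rho0x addr0. Qed.
Lemma rho_sumx k (I : Type) (r : seq I) (F : I -> 'M[algC]_n) w :
  (forall i, D k (F i)) ->
  rho k (\sum_(i <- r) F i) w = \sum_(i <- r) rho k (F i) w.
Proof.
move=> hF; elim: r => [|a r IH]; first by rewrite !big_nil rho0x.
rewrite !big_cons rhoDx ?IH //; elim: r {IH} => [|b r IH]; first by rewrite big_nil D0.
by rewrite big_cons DD.
Qed.

Lemma rhoBr k l x y w : D k x -> D l y ->
  rho k x (rho l y w) = rho l y (rho k x w) + rho (k + l)%N (x *m y - y *m x) w.
Proof. by case: HR => _ _ H hx hy; rewrite -H // addrC subrK. Qed.

Variables (c1 c2 : 'I_n -> int) (v : V).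
Hypothesis HM : M_rels c1 c2 rho v.

Definition Fo (g : 'I_n * 'I_n) (w : V) := rho 1%N (froot g) w.
Definition monw (L : seq ('I_n * 'I_n)) (w : V) := foldr Fo w L.
Definition mon L := monw L v.
Definition allpr (L : seq ('I_n * 'I_n)) := all (@posroot n) L.

Lemma nminus_froot g : posroot g -> nminus_pred (froot g).
Proof.
move=> hg; apply/forallP=> i; apply/forallP=> j; apply/implyP=> le.
rewrite mxE; apply/eqP; case: (i =P g.2) => [ei|] /=; last by rewrite mulr0n.
case: (j =P g.1) => [ej|] /=; last by rewrite mulr0n.
by move: hg le; rewrite /posroot -ei -ej => /leq_trans h /h; rewrite ltnn.
Qed.

Lemma nminus_sl x : nminus_pred x -> sl_pred x.
Proof.
move=> /forallP hx; rewrite /sl_pred /mxtrace big1 // => i _.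
by move: (forallP (hx i) i); rewrite leqnn => /eqP.
Qed.

Lemma D1froot g : posroot g -> D 1 (froot g).
Proof. by move=> hg; apply: Dsl => //; apply/nminus_sl/nminus_froot. Qed.

Lemma FoDw g w u : posroot g -> Fo g (w + u) = Fo g w + Fo g u.
Proof. by move=> hg; apply: rhoDw; apply: D1froot. Qed.
Lemma FoZw g a w : posroot g -> Fo g (a *: w) = a *: Fo g w.
Proof. by move=> hg; apply: rhoZw; apply: D1froot. Qed.
Lemma Fo0 g : posroot g -> Fo g 0 = 0.
Proof. by move=> hg; apply: rho0w; apply: D1froot. Qed.

Lemma monwD L w u : allpr L -> monw L (w + u) = monw L w + monw L u.
Proof. by elim: L => //= g L IH /andP[hg hL]; rewrite IH // FoDw. Qed.
Lemma monwZ L a w : allpr L -> monw L (a *: w) = a *: monw L w.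
Proof. by elim: L => //= g L IH /andP[hg hL]; rewrite IH // FoZw. Qed.
Lemma monw0 L : allpr L -> monw L 0 = 0.
Proof. by elim: L => //= g L IH /andP[hg hL]; rewrite IH // Fo0. Qed.
Lemma monw_sum L (I : Type) (r : seq I) (F : I -> V) : allpr L ->
  monw L (\sum_(i <- r) F i) = \sum_(i <- r) monw L (F i).
Proof. by move=> hL; apply: (big_morph _ (fun a b => monwD a b hL) (monw0 hL)). Qed.
Lemma monw_cat A B w : monw (A ++ B) w = monw A (monw B w).
Proof. exact: foldr_cat. Qed.
Lemma mon_cat A B : mon (A ++ B) = monw A (mon B).
Proof. exact: monw_cat. Qed.

Lemma kill L : allpr L ->
  (forall k x, (1 <= k)%N -> b_pred x -> rho k x (mon L) = 0) /\
  (forall k x, (2 <= k)%N -> nminus_pred x -> rho k x (mon L) = 0).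
Proof.
case: HM => _ _ H3 H4 _.
elim: L => [|g L IH] /=; first by split=> k x hk hx; [exact: H3 | exact: H4].
case/andP=> hg /IH [IH1 IH2].
have key : forall k x, (1 <= k)%N -> D k x -> rho k x (mon L) = 0 ->
    rho k x (Fo g (mon L)) = 0.
  move=> k x hk hx h0; rewrite /Fo rhoBr ?D1froot // h0 rho0w ?D1froot // add0r.
  have hsl := sl_comm x (froot g).
  set z := (x *m froot g - froot g *m x).
  have Dl : D (k + 1) (lowp z) by apply: Dsl; [rewrite addn1 | exact: sl_low].
  have bu : b_pred (upp z) by apply: b_upp.
  have Du : D (k + 1) (upp z) by apply: Db.
  rewrite [X in rho _ X](low_up z) (rhoDx _ Dl Du).
  rewrite (IH1 _ (upp z)) ?addn1 // (IH2 _ (lowp z)) ?addr0 //.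
  exact: nminus_low.
split=> k x hk hx.
  by apply: key => //; [apply: Db | exact: IH1].
apply: key => //; first exact: ltnW.
  by apply: Dsl; [exact: ltnW | exact: nminus_sl].
exact: IH2.
Qed.

Lemma kill_sl L k y : allpr L -> (2 <= k)%N -> sl_pred y -> rho k y (mon L) = 0.
Proof.
move=> hL hk hy; have [K1 K2] := kill hL.
have Dl : D k (lowp y) by apply: Dsl; [exact: ltnW | exact: sl_low].
have bu : b_pred (upp y) by apply: b_upp.
have Du : D k (upp y) by apply: Db.
rewrite [X in rho _ X](low_up y) (rhoDx _ Dl Du).
rewrite (K1 _ (upp y)) ?(ltnW hk) // (K2 _ (lowp y)) ?addr0 //.
exact: nminus_low.
Qed.

Lemma act1 L y : allpr L -> sl_pred y ->
  rho 1 y (mon L) = \sum_(i < n) \sum_(j < n) (if (j < i)%N then y i j else 0) *: mon ((j, i) :: L).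
Proof.
move=> hL hy; have [K1 K2] := kill hL.
have Dl : D 1 (lowp y) by apply: Dsl; [done | exact: sl_low].
have bu : b_pred (upp y) by apply: b_upp.
have Du : D 1 (upp y) by apply: Db.
rewrite [X in rho _ X](low_up y) (rhoDx _ Dl Du) (K1 _ (upp y)) // addr0.
rewrite lowp_sum rho_sumx; last first.
  move=> i; elim: (index_enum _) => [|a r IHr]; first by rewrite big_nil D0.
  by rewrite big_cons DD //; apply: Dsl => //; apply: sl_term.
apply: eq_bigr => i _; rewrite rho_sumx; last by move=> j; apply: Dsl => //; apply: sl_term.
apply: eq_bigr => j _; case: ifP => ji; last by rewrite !scale0r rho0x.
rewrite rhoZx //; apply: Dsl => //; apply: sl_delta; rewrite neq_ltn ji orbT //.
Qed.

Lemma Fo_comm g h L : posroot g -> posroot h -> allpr L ->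
  Fo g (Fo h (mon L)) = Fo h (Fo g (mon L)).
Proof.
move=> hg hh hL; rewrite /Fo rhoBr ?D1froot //.
have [_ K2] := kill hL.
by rewrite (K2 _ _ _ (nminus_comm (nminus_froot hg) (nminus_froot hh))) // addr0.
Qed.

Lemma mon_insert L1 g L2 : allpr (L1 ++ g :: L2) ->
  mon (L1 ++ g :: L2) = mon (g :: L1 ++ L2).
Proof.
elim: L1 => [|h L1 IH] //= /andP[hh hL].
have hg : posroot g by move: hL; rewrite /allpr all_cat /= => /and3P[].
have hL' : allpr (L1 ++ L2) by move: hL; rewrite /allpr !all_cat /= => /and3P[-> _ ->].
rewrite /mon /= -/(mon (L1 ++ g :: L2)) IH //=.
by rewrite -/(mon (L1 ++ L2)) Fo_comm.
Qed.

Lemma mon_perm L L' : perm_eq L L' -> allpr L -> mon L = mon L'.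
Proof.
elim: L L' => [|g L IH] L'; first by rewrite perm_sym => /perm_nilP ->.
move=> hp hL; have gL' : g \in L' by rewrite -(perm_mem hp) mem_head.
case/splitPr: gL' hp => L1 L2 hp.
have hL' : allpr (L1 ++ g :: L2) by rewrite /allpr -(perm_all _ hp).
rewrite mon_insert //; move: hL => /= /andP[hg hL].
have hp' : perm_eq L (L1 ++ L2).
  by rewrite -(perm_cons g); apply: (perm_trans hp); rewrite -cat1s perm_catCA.
by rewrite /mon /= -/(mon L) -/(mon (L1 ++ L2)) (IH _ hp').
Qed.


Definition spanM (w : V) := exists l : seq (algC * seq ('I_n * 'I_n)),
  all (fun p => allpr p.2) l /\ w = \sum_(p <- l) p.1 *: mon p.2.

Lemma spanM0 : spanM 0.
Proof. by exists [::]; rewrite big_nil. Qed.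
Lemma spanM_mon L : allpr L -> spanM (mon L).
Proof. by move=> hL; exists [:: (1, L)]; rewrite /= hL big_seq1 scale1r. Qed.
Lemma spanMD w u : spanM w -> spanM u -> spanM (w + u).
Proof.
move=> [l1 [h1 ->]] [l2 [h2 ->]]; exists (l1 ++ l2).
by rewrite all_cat h1 h2 big_cat.
Qed.
Lemma spanMZ a w : spanM w -> spanM (a *: w).
Proof.
move=> [l [h ->]]; exists [seq (a * p.1, p.2) | p <- l]; split.
  by rewrite all_map; apply: sub_all h => p.
by rewrite big_map scaler_sumr; apply: eq_bigr => p _; rewrite scalerA.
Qed.
Lemma spanM_sum (I : Type) (r : seq I) (F : I -> V) :
  (forall i, spanM (F i)) -> spanM (\sum_(i <- r) F i).
Proof.
move=> hF; elim: r => [|a r IH]; first by rewrite big_nil; exact: spanM0.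
by rewrite big_cons; apply: spanMD.
Qed.

Lemma spanM_lin (f : V -> V) w : spanM w ->
  (forall a u u', f (a *: u + u') = a *: f u + f u') ->
  (forall L, allpr L -> spanM (f (mon L))) -> spanM (f w).
Proof.
move=> [l [h ->]] hlin hm.
have f0 : f 0 = 0.
  by move: (hlin 1 0 0); rewrite scaler0 addr0 scale1r => /eqP; rewrite -subr_eq subrr eq_sym => /eqP.
elim: l h => [|p l IH] /=; first by rewrite big_nil f0 => _; exact: spanM0.
case/andP=> hp hl; rewrite big_cons hlin; apply: spanMD; last exact: IH.
by apply: spanMZ; apply: hm.
Qed.

Lemma spanM_F g w : posroot g -> spanM w -> spanM (Fo g w).
Proof.
move=> hg hw; apply: spanM_lin => //.
  by move=> a u u'; rewrite FoDw // FoZw.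
by move=> L hL; apply: (@spanM_mon (g :: L)); rewrite /allpr /= hg.
Qed.

Lemma spanM_act1 L y : allpr L -> sl_pred y -> spanM (rho 1 y (mon L)).
Proof.
move=> hL hy; rewrite act1 //; apply: spanM_sum => i; apply: spanM_sum => j.
case: ifP => ji; last by rewrite scale0r; exact: spanM0.
by apply: spanMZ; apply: (@spanM_mon ((j, i) :: L)); rewrite /allpr /= {1}/posroot /= ji; exact: hL.
Qed.

Lemma rho0_v x : b_pred x -> spanM (rho 0 x v).
Proof.
case: HM => H1 H2 _ _ _ hx.
have hsl := b_sl hx.
rewrite (b_nup_dg hx) rhoDx; [|exact: Db (b_nup _) | exact: Db (b_dg hsl)].
rewrite H1 ?nplus_nup // add0r H2 ?h_dg //.
apply: spanMZ; exact: (@spanM_mon [::]).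
Qed.

Lemma rho0_mon L x : allpr L -> b_pred x -> spanM (rho 0 x (mon L)).
Proof.
move=> hL hx; have Dx : D 0 x by apply: Db.
elim: L hL => [|g L IH] /=; first by move=> _; exact: rho0_v.
case/andP=> hg hL; rewrite /mon /= -/(mon L) /Fo rhoBr //; last exact: D1froot.
apply: spanMD; first by apply: spanM_F => //; apply: IH.
by apply: spanM_act1 => //; apply: sl_comm.
Qed.

Lemma cyc_spanM w : cyc (@a_dom n) rho v w -> spanM w.
Proof.
elim=> [|w1 u _ h1 _ h2|a w1 _ h1|k x w1 Dx _ h1].
- exact: (@spanM_mon [::]).
- exact: spanMD.
- exact: spanMZ.
apply: spanM_lin => //.
  by move=> a u u'; case: HR => H _ _; rewrite H.
move=> L hL; case: k Dx => [|[|k]] Dx.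
- exact: rho0_mon.
- exact: spanM_act1.
- by rewrite kill_sl //; exact: spanM0.
Qed.


Definition eroot (ga : 'I_n * 'I_n) : 'M[algC]_n := delta_mx ga.1 ga.2.

Lemma nplus_eroot ga : posroot ga -> nplus_pred (eroot ga).
Proof.
move=> hg; apply/forallP=> i; apply/forallP=> j; apply/implyP=> le.
rewrite mxE; apply/eqP; case: (i =P ga.1) => [ei|] /=; last by rewrite mulr0n.
case: (j =P ga.2) => [ej|] /=; last by rewrite mulr0n.
by move: hg le; rewrite /posroot -ei -ej => /leq_trans h /h; rewrite ltnn.
Qed.

Lemma b_eroot ga : posroot ga -> b_pred (eroot ga).
Proof.
move=> hg; apply/andP; split.
  apply/forallP=> i; apply/forallP=> j; apply/implyP=> lt.
  rewrite mxE; apply/eqP; case: (i =P ga.1) => [ei|] /=; last by rewrite mulr0n.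
  case: (j =P ga.2) => [ej|] /=; last by rewrite mulr0n.
  by move: hg lt; rewrite /posroot -ei -ej => /ltn_trans h /h; rewrite ltnn.
by apply: sl_delta; rewrite neq_ltn; apply/orP; left; exact: hg.
Qed.

Lemma Dact_allpr ga L p : allpr L -> p \in Dact ga L -> allpr p.2.
Proof.
case: p => d L' hL /mem_Dact [P [g [Q [g' [eL -> ht]]]]].
move: hL; rewrite eL /allpr !all_cat /= => /and3P[-> _ ->]; rewrite andbT.
move: ht; rewrite /trim mem_cat; case/orP.
  by case: ifP => // /andP[_ h]; rewrite inE => /eqP [_ ->].
by case: ifP => // /andP[_ h]; rewrite inE => /eqP [_ ->].
Qed.

Lemma act_eroot ga L : posroot ga -> allpr L ->
  rho 0 (eroot ga) (mon L) = \sum_(p <- Dact ga L) p.1 *: mon p.2.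
Proof.
case: HM => H1 _ _ _ _ hga.
have De : D 0 (eroot ga) by apply: Db; apply: b_eroot.
elim: L => [|g L IH] /=; first by rewrite big_nil => _; exact: (H1 _ (nplus_eroot hga)).
case/andP=> hg hL; rewrite /mon /= -/(mon L) /Fo.
rewrite (@rhoBr 0 1 (eroot ga) (froot g) (mon L) De (D1froot hg)) big_cat /= !big_map addrC; congr (_ + _).
  rewrite IH // rho_sumw ?D1froot //; apply: eq_bigr => p _.
  by rewrite rhoZw ?D1froot.
rewrite act1 //; last exact: sl_comm.
set A := fun i j : 'I_n => ((ga.2 == g.2) && (g.1 < ga.1)%N && (i == ga.1) && (j == g.1)).
set B := fun i j : 'I_n => ((ga.1 == g.1) && (ga.2 < g.2)%N && (i == g.2) && (j == ga.2)).
rewrite (eq_bigr (fun i => \sum_(j < n) (A i j)%:R *: mon ((j, i) :: L) -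
    \sum_(j < n) (B i j)%:R *: mon ((j, i) :: L))); last first.
  move=> i _; rewrite -sumrB; apply: eq_bigr => j _.
  by rewrite /eroot /froot comm_entry scalerBl.
rewrite sumrB (@sum2_delta _ _ _ _ _ (fun i j => mon ((j, i) :: L))).
rewrite (@sum2_delta _ _ _ _ _ (fun i j => mon ((j, i) :: L))).
rewrite /trim big_cat /=.
case: ifP => _; case: ifP => _; rewrite ?big_nil ?big_seq1 /= ?scale1r ?scaleN1r ?sub0r ?subr0 ?addr0 ?add0r ?oppr0 //.
Qed.

Definition Eops (ops : seq ('I_n * 'I_n)) (w : V) := foldr (fun ga w => rho 0 (eroot ga) w) w ops.

Lemma Dacts_allpr ops L p : allpr L -> p \in Dacts ops L -> allpr p.2.
Proof.
move=> hL; elim: ops p => [|ga ops IH] p /=; first by rewrite inE => /eqP ->.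
case: p => d L' /mem_step [p [q [hp hq -> ->]]].
by apply: (Dact_allpr (IH _ hp) hq).
Qed.

Lemma Eops_mon ops L : all (@posroot n) ops -> allpr L ->
  Eops ops (mon L) = \sum_(p <- Dacts ops L) p.1 *: mon p.2.
Proof.
move=> hops hL; elim: ops hops => [|ga ops IH] /=.
  by move=> _; rewrite /Dacts /= big_seq1 scale1r.
case/andP=> hga hops; rewrite IH // rho_sumw; last by apply: Db; apply: b_eroot.
rewrite /Dacts /DactsFrom /= -/(DactsFrom ops [:: (1, L)]) -/(Dacts ops L) /step big_flatten /= big_map.
rewrite big_seq [RHS]big_seq; apply: eq_bigr => p hp.
rewrite rhoZw; last by apply: Db; apply: b_eroot.
rewrite act_eroot //; last exact: (Dacts_allpr hL hp).
by rewrite scaler_sumr big_map; apply: eq_bigr => q _; rewrite scalerA.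
Qed.

Lemma Eops0 ops : all (@posroot n) ops -> Eops ops 0 = 0.
Proof.
elim: ops => //= ga ops IH /andP[hga hops]; rewrite IH //.
by apply: rho0w; apply: Db; apply: b_eroot.
Qed.


Local Notation a := (amin c1 c2).

Definition spanS (w : V) := exists l : seq (algC * ('I_n -> 'I_n -> nat)),
  (forall p, List.In p l -> in_S a p.2) /\ w = \sum_(p <- l) p.1 *: fvec rho p.2 v.

Lemma spanS0 : spanS 0.
Proof. by exists [::]; rewrite big_nil. Qed.
Lemma spanSD w u : spanS w -> spanS u -> spanS (w + u).
Proof.
move=> [l1 [h1 ->]] [l2 [h2 ->]]; exists (l1 ++ l2); split; last by rewrite big_cat.
by move=> p hp; case: (List.in_app_or _ _ _ hp) => ?; [apply: h1 | apply: h2].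
Qed.
Lemma spanSZ d w : spanS w -> spanS (d *: w).
Proof.
move=> [l [h ->]]; exists [seq (d * p.1, p.2) | p <- l]; split.
  move=> p hp; case: (proj1 (List.in_map_iff _ _ _) hp) => q [<- hq]; exact: (h q hq).
by rewrite big_map scaler_sumr; apply: eq_bigr => p _; rewrite scalerA.
Qed.
Lemma spanSN w : spanS w -> spanS (- w).
Proof. by move=> h; rewrite -scaleN1r; apply: spanSZ. Qed.
Lemma spanS_sum (I : eqType) (r : seq I) (P : pred I) (F : I -> V) :
  (forall i, i \in r -> P i -> spanS (F i)) -> spanS (\sum_(i <- r | P i) F i).
Proof.
elim: r => [|x r IH] hF; first by rewrite big_nil; exact: spanS0.
rewrite big_cons; case: ifP => Px.
  apply: spanSD; first by apply: hF; rewrite ?mem_head.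
  by apply: IH => i ir; apply: hF; rewrite inE ir orbT.
by apply: IH => i ir; apply: hF; rewrite inE ir orbT.
Qed.

Lemma iter_Fo k g w : iter k (Fo g) w = monw (nseq k g) w.
Proof. by elim: k => //= k ->. Qed.

Lemma fvec_mon s : fvec rho s v = mon (flatten [seq nseq (s p.1 p.2) p | p <- posroots n]).
Proof.
rewrite /fvec /mon; elim: (posroots n) => //= p ps ->.
by rewrite monw_cat -iter_Fo.
Qed.

Lemma mon_nseq k g : mon (nseq k g) = iter k (Fo g) v.
Proof. by rewrite iter_Fo. Qed.

Lemma iter_Fo0 k g : posroot g -> iter k (Fo g) 0 = 0.
Proof. by move=> hg; elim: k => //= k ->; apply: Fo0. Qed.


Lemma inrect_pr (i j : 'I_n) L : all (inrect i j) L -> allpr L.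
Proof. by apply: sub_all => g /and3P[]. Qed.

Lemma reduce L (pp : seq ('I_n * 'I_n)) (x0 : 'I_n * 'I_n) : allpr L -> dyck pp ->
  (a (base_root x0 pp) < \sum_(g <- pp) count_mem g L)%N ->
  (forall L', allpr L' -> (weight L' < weight L)%N -> spanS (mon L')) ->
  spanS (mon L).
Proof.
case: HM => _ _ _ _ H5.
case: pp => // b0 q hL /andP[hall hpath] hsum IH.
set pp := b0 :: q.
set i := b0.1; set j := (last b0 q).2.
have hbase : base_root x0 pp = (i, j) by [].
rewrite hbase in hsum.
set T := flatten [seq nseq (count_mem g L) g | g <- pp].
have Tin : forall g, g \in T -> g \in pp by move=> g; apply: mem_flatten_nseq.
have hle0 : forall g, g \in pp -> le2 b0 g.
  move=> g; rewrite inE => /orP[/eqP ->|gq]; first by rewrite /le2 !leqnn.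
  exact: path_le2 hpath _ gq.
have hle1 : forall g, g \in pp -> le2 g (last b0 q) by move=> g; exact: path_last hpath g.
have hrect : all (inrect i j) T.
  apply/allP=> g /Tin gp; move: (hle0 g gp) (hle1 g gp) => /andP[h1 _] /andP[_ h2].
  by rewrite /inrect h1 h2 /=; move: (allP hall g gp).
have ij : (i < j)%N.
  move: (allP hall b0 (mem_head _ _)) (hle1 b0 (mem_head _ _)) => h /andP[_ h2].
  exact: leq_trans h h2.
have hchain : chain T by apply: (chain_sub Tin); exact: path_chain hpath.
have upp : uniq pp by exact: path_uniq hpath.
set rest := [seq z <- L | predC (fun z : 'I_n * 'I_n => z \in pp) z].
have pL : perm_eq L (rest ++ T).
  have h1 := perm_filterC (fun z : 'I_n * 'I_n => z \in pp) L.
  have h2 : perm_eq ([seq z <- L | z \in pp] ++ rest) L by apply/permPl.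
  rewrite -(permPl h2).
  by rewrite perm_catC perm_cat2l; apply: perm_filter_flatten.
have hrest : allpr rest by rewrite /allpr all_filter; apply: sub_all hL => z hz; apply/implyP => _.
set N := size T.
have hN : (a (i, j) < N)%N by rewrite /N size_flatten_nseq.
set ops := map (opr i j) (opsT i j T).
have hops : all (@posroot n) ops.
  rewrite /ops all_map; apply: sub_all (opsT_good hrect) => -[[] c] //=.
have hij : posroot (i, j) by [].
have hz : mon (nseq N (i, j)) = 0.
  by rewrite mon_nseq -(subnK hN) iterD H5 // iter_Fo0.
set Ds := Dacts ops (nseq N (i, j)).
have hnseq : allpr (nseq N (i, j)) by apply/allP=> g /nseqP [-> _].
have h0 : \sum_(p <- Ds) p.1 *: mon (rest ++ p.2) = 0.
  have E := Eops_mon hops hnseq; rewrite hz Eops0 // in E.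
  have E2 := congr1 (monw rest) E; rewrite monw0 // monw_sum // in E2.
  rewrite [RHS]E2; apply: eq_big_seq => p hp.
  by rewrite monwZ // mon_cat.
have hout : forall p, p \in Ds -> [/\ p.1 = (-1) ^+ size (lefts (opsT i j T)), all (inrect i j) p.2,
      perm_eq (map fst p.2) (map fst T) & perm_eq (map snd p.2) (map snd T)].
  by move=> [d L'] hp; apply: outcome_inv.
set c0 : algC := (-1) ^+ size (lefts (opsT i j T)).
have h1 : \sum_(p <- Ds) mon (rest ++ p.2) = 0.
  move: h0; rewrite (eq_big_seq (fun p => c0 *: mon (rest ++ p.2))); last first.
    by move=> p hp; have [-> _ _ _] := hout p hp.
  rewrite -scaler_sumr => /eqP; rewrite scaler_eq0 signr_eq0 /= => /eqP //.
rewrite (bigID (fun p => perm_eq p.2 T)) /= in h1.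
set k := count (fun p => perm_eq p.2 T) Ds.
have hpart : \sum_(p <- Ds | perm_eq p.2 T) mon (rest ++ p.2) = mon L *+ k.
  rewrite big_seq_cond (eq_bigr (fun _ => mon L)); last first.
    move=> p /andP[hp pT]; have [_ hr _ _] := hout p hp.
    have hpr : allpr (rest ++ p.2).
      by rewrite /allpr all_cat; apply/andP; split; [exact: hrest | exact: inrect_pr hr].
    have pp2 : perm_eq (rest ++ p.2) (rest ++ T) by rewrite perm_cat2l.
    rewrite (mon_perm pp2 hpr); apply/esym; exact: mon_perm.
  rewrite -big_seq_cond big_const_seq iter_addr_0 //.
have kpos : (0 < k)%N.
  rewrite /k -has_count; apply/hasP.
  have [d hd] := exists_diag hrect.
  by exists (d, T) => //=.
rewrite hpart in h1.
have eL : mon L = (k%:R)^-1 *: (- \sum_(p <- Ds | ~~ perm_eq p.2 T) mon (rest ++ p.2)).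
  move/eqP: h1; rewrite addr_eq0 => /eqP <-.
  rewrite -scaler_nat scalerA mulVf ?scale1r //.
  by rewrite pnatr_eq0 -lt0n.
rewrite eL; apply: spanSZ; apply: spanSN; apply: spanS_sum => p hp npT.
have [_ hr hf hs] := hout p hp.
apply: IH.
  by rewrite /allpr all_cat; apply/andP; split; [exact: hrest | exact: inrect_pr hr].
rewrite (weight_perm pL) (weight_cat rest T) (weight_cat rest p.2) ltn_add2l.
case: (rearr (erefl (size T)) hchain hf hs) => // pT.
by move: npT; rewrite pT.
Qed.


Lemma core L : allpr L -> spanS (mon L).
Proof.
suff H : forall m L, (weight L < m)%N -> allpr L -> spanS (mon L).
  by move=> hL; apply: (H (weight L).+1).
elim=> // m IHm {}L hw hL.
set s := fun x y : 'I_n => count_mem (x, y) L.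
have hs : forall g, s g.1 g.2 = count_mem g L by move=> [x y].
case: (classic (in_S a s)) => hS.
  exists [:: (1, s)]; split.
    by move=> p [<- | []].
  rewrite big_seq1 scale1r fvec_mon; apply: mon_perm => //.
  have -> : [seq nseq (s p.1 p.2) p | p <- posroots n] = [seq nseq (count_mem p L) p | p <- posroots n].
    by apply: eq_map => p; rewrite hs.
  have hf : [seq z <- L | z \in posroots n] = L.
    by apply/all_filterP; apply: sub_all hL => z hz; rewrite mem_posroots.
  by rewrite -{1}hf; apply: perm_filter_flatten; exact: uniq_posroots.
have [pp hp] := not_all_ex_not _ _ hS.
have [x0 hx] := not_all_ex_not _ _ hp.
have [hd hlt] := imply_to_and _ _ hx.
apply: (reduce (x0 := x0) hL hd).
  by rewrite ltnNge; apply/negP => h; apply: hlt; rewrite (eq_bigr _ (fun g _ => esym (hs g))).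
move=> L' hL' hw'; apply: IHm => //.
exact: leq_trans hw' hw.
Qed.

Lemma spanM_spanS w : spanM w -> spanS w.
Proof.
move=> [l [hl ->]]; apply: spanS_sum => p hp _.
by apply: spanSZ; apply: core; move: (allP hl p hp).
Qed.

End Rep.

Lemma In_nth (T : Type) (x0 : T) (l : seq T) i : (i < size l)%N -> List.In (nth x0 l i) l.
Proof.
elim: l i => // x l IH [|i] /=; first by left.
by rewrite ltnS => h; right; apply: IH.
Qed.

Lemma spanS_in_span n (V : lmodType algC) (rho : nat -> 'M[algC]_n -> V -> V) (c1 c2 : 'I_n -> int) v w :
  spanS rho c1 c2 v w -> in_span_S rho (amin c1 c2) v w.
Proof.
move=> [l [hl ->]].
set d0 : algC * ('I_n -> 'I_n -> nat) := (0, fun _ _ => 0%N).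
exists (size l), (fun i => (nth d0 l i).1), (fun i => (nth d0 l i).2); split.
  by move=> i; apply: hl; apply: In_nth.
by rewrite (big_nth d0) big_mkord.
Qed.

Lemma a_dom_sl n k (x : 'M[algC]_n) : a_dom k x -> sl_pred x.
Proof. by rewrite /a_dom; case: (k == 0)%N => // /b_sl. Qed.

Lemma cyc_mono n (V : lmodType algC) (A B : nat -> pred 'M[algC]_n) rho (v : V) w :
  (forall k x, A k x -> B k x) -> cyc A rho v w -> cyc B rho v w.
Proof.
move=> hAB; elim=> [|w1 u _ h1 _ h2|a w1 _ h1|k x w1 Ax _ h1].
- exact: cyc_gen.
- exact: cyc_add.
- exact: cyc_scale.
- by apply: cyc_act => //; apply: hAB.
Qed.

Theorem corollary4p3 (n : nat) (hn : (1 < n)%N) (c1 c2 : 'I_n -> int)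
  (hc1 : dominant c1) (hc2 : dominant c2) :
  (* M_{lambda1,lambda2}: in every a-module generated-by-v quotient of the
     universal one, the vectors prod (f_alpha (x) t)^{s_alpha}.v, s in S(a),
     span U(a).v *)
  (forall (V : lmodType algC) (rho : nat -> 'M[algC]_n -> V -> V) (v : V),
     is_rep (@a_dom n) rho -> M_rels c1 c2 rho v ->
     forall w, cyc (@a_dom n) rho v w -> in_span_S rho (amin c1 c2) v w) /\
  (* F_{lambda1,lambda2}: they span U(n^- (x) t).v *)
  (forall (V : lmodType algC) (rho : nat -> 'M[algC]_n -> V -> V) (v : V),
     is_rep (@cur_dom n) rho -> F_rels c1 c2 rho v ->
     forall w, cyc (@nmt_dom n) rho v w -> in_span_S rho (amin c1 c2) v w).
Proof.
split.
  move=> V rho v HR HM w hw.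
  apply: spanS_in_span; apply: (spanM_spanS HR HM); exact: (cyc_spanM HR HM hw).
move=> V rho v HR HF w hw.
have HR' : is_rep (@a_dom n) rho.
  case: HR => H1 H2 H3; split.
  - by move=> k x hx; apply: H1; apply: a_dom_sl hx.
  - by move=> k x y hx hy; apply: H2; [apply: a_dom_sl hx | apply: a_dom_sl hy].
  - by move=> k l x y hx hy; apply: H3; [apply: a_dom_sl hx | apply: a_dom_sl hy].
have HM : M_rels c1 c2 rho v.
  case: HF => F1 F2 F3 F4 [F5 F6]; split.
  - by move=> x hx; apply: F1.
  - exact: F4.
  - move=> k x hk hx; have hsl := b_sl hx.
    rewrite (b_nup_dg hx) (rhoDx HR' _ (Db _ (b_nup x)) (Db _ (b_dg hsl))).
    by rewrite F1 ?nplus_nup // F2 ?h_dg // addr0.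
  - exact: F3.
  - exact: F6.
apply: spanS_in_span; apply: (spanM_spanS HR' HM); apply: (cyc_spanM HR' HM).
apply: (cyc_mono _ hw) => k x; rewrite /nmt_dom /a_dom.
case: (k =P 1%N) => [->|_] /= hx; first exact: nminus_sl hx.
by move: hx; rewrite /pred0 /=.
Qed.
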